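(* Let $n\ge 1$, $M\ge1$ be integers and $a=(a_0,\dots,a_n)\in\mathbb{Z}^{n+1}$ with $0\le a_i\le M$ and $a_0=a_n=0$. If there exists a non-periodic real-valued tropical recurrent minimal sequence satisfying $a$, then there exists a non-periodic tropical recurrent sequence satisfying $a$ all of whose entries lie in $V=\{j+i/(2n+2): 0\le j<M,\ 0\le i\le 2n+2,\ i,j\in\mathbb{Z}\}$.
   Context: A tropical recurrent sequence is $y=(y_j)_{j\in\mathbb{Z}}$ with real entries; it satisfies $a$ if for every $k\in\mathbb{Z}$ the minimum $\min_{0\le i\le n}\{a_i+y_{i+k}\}$ is attained for at least two different indices $i$; it is minimal if for every $j\in\mathbb{Z}$ there is $k$ with $j-n\le k\le j$ and $a_{j-k}+y_j=\min_{0\le i\le n}\{a_i+y_{i+k}\}$. It is periodic if there is $d\ge1$ with $y_{j+d}=y_j$ for all $j$, and non-periodic otherwise. *)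

(* Defs.v *)
From Stdlib Require Import Reals ZArith Lia Lra.
Open Scope R_scope.

(* A tropical recurrent sequence y : Z -> R; a = (a_0,...,a_n) given as a : nat -> Z,
   only the values a 0, ..., a n matter. *)

Definition trop_term (n : nat) (a : nat -> Z) (y : Z -> R) (k : Z) (i : nat) : R :=
  IZR (a i) + y (Z.of_nat i + k)%Z.

Definition attains_min (n : nat) (a : nat -> Z) (y : Z -> R) (k : Z) (i0 : nat) : Prop :=
  (i0 <= n)%nat /\ forall i : nat, (i <= n)%nat -> trop_term n a y k i0 <= trop_term n a y k i.

Definition satisfies (n : nat) (a : nat -> Z) (y : Z -> R) : Prop :=
  forall k : Z, exists i1 i2 : nat,
    i1 <> i2 /\ attains_min n a y k i1 /\ attains_min n a y k i2.

Definition minimal_seq (n : nat) (a : nat -> Z) (y : Z -> R) : Prop :=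
  forall j : Z, exists k : Z,
    (j - Z.of_nat n <= k <= j)%Z /\ attains_min n a y k (Z.to_nat (j - k)).

Definition periodic (y : Z -> R) : Prop :=
  exists d : Z, (1 <= d)%Z /\ forall j : Z, y (j + d)%Z = y j.

Definition in_V (n M : nat) (x : R) : Prop :=
  exists j i : Z, (0 <= j < Z.of_nat M)%Z /\ (0 <= i <= 2 * Z.of_nat n + 2)%Z /\
    x = IZR j + IZR i / IZR (2 * Z.of_nat n + 2).

(* Main.v *)
Require Import Defs.
From Stdlib Require Import Reals ZArith Lia Lra Classical.
Open Scope R_scope.

Lemma per_mult (y : Z -> R) d : (forall j, y (j + d)%Z = y j) ->
  forall N : nat, forall j, y (j + Z.of_nat N * d)%Z = y j /\ y (j - Z.of_nat N * d)%Z = y j.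
Proof.
  intros H N. induction N as [|N IH]; intros j.
  - simpl. rewrite Z.add_0_r, Z.sub_0_r. auto.
  - split.
    + replace (j + Z.of_nat (S N) * d)%Z with ((j + Z.of_nat N * d) + d)%Z
        by (rewrite Nat2Z.inj_succ; ring).
      rewrite H. apply IH.
    + rewrite <- (H (j - Z.of_nat (S N) * d)%Z).
      replace (j - Z.of_nat (S N) * d + d)%Z with (j - Z.of_nat N * d)%Z
        by (rewrite Nat2Z.inj_succ; ring).
      apply IH.
Qed.

Lemma perZ (y : Z -> R) d : (forall j, y (j + d)%Z = y j) ->
  forall t j, y (j + t * d)%Z = y j.
Proof.
  intros H t j. destruct (Z_le_gt_dec 0 t) as [h|h].
  - replace t with (Z.of_nat (Z.to_nat t)) by lia. apply per_mult; auto.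
  - replace (j + t * d)%Z with (j - Z.of_nat (Z.to_nat (- t)) * d)%Z
      by (rewrite Z2Nat.id by lia; ring).
    apply per_mult; auto.
Qed.

Lemma sat_map (n:nat) a y (f : R -> R) :
  (forall x x', x <= x' -> f x <= f x') ->
  (forall (m:Z) x, f (IZR m + x) = IZR m + f x) ->
  satisfies n a y -> satisfies n a (fun j => f (y j)).
Proof.
  intros Hm Ht Hs k. destruct (Hs k) as (i1 & i2 & Hne & [Hi1 H1] & [Hi2 H2]).
  exists i1, i2. split; [exact Hne|]. unfold attains_min, trop_term in *.
  split; split; auto; intros i Hi; rewrite <- !Ht; apply Hm; auto.
Qed.

Lemma sat_window n a (u w : Z -> R) k :
  (forall i:nat, (i <= n)%nat -> w (Z.of_nat i + k)%Z = u (Z.of_nat i + k)%Z) ->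
  (exists i1 i2 : nat, i1 <> i2 /\ attains_min n a u k i1 /\ attains_min n a u k i2) ->
  (exists i1 i2 : nat, i1 <> i2 /\ attains_min n a w k i1 /\ attains_min n a w k i2).
Proof.
  intros H (i1 & i2 & Hne & [Hi1 H1] & [Hi2 H2]). exists i1, i2.
  unfold attains_min, trop_term in *.
  repeat split; auto; intros i Hi; rewrite !H; auto.
Qed.

Definition g (s x : R) : R := IZR (up (x - s)).
Definition fl (x : R) : Z := (up x - 1)%Z.
Definition fr (x : R) : R := x - IZR (fl x).

Lemma up_mono x x' : x <= x' -> (up x <= up x')%Z.
Proof.
  intros H. destruct (archimed x) as [A1 A2]. destruct (archimed x') as [B1 B2].
  destruct (Z_le_gt_dec (up x) (up x')) as [h|h]; auto.
  exfalso. assert (IZR (up x') <= IZR (up x) - 1).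
  { rewrite <- minus_IZR. apply IZR_le. lia. } lra.
Qed.

Lemma up_trans (m : Z) x : up (IZR m + x) = (m + up x)%Z.
Proof.
  destruct (archimed x) as [A1 A2]. symmetry. apply tech_up; rewrite plus_IZR; lra.
Qed.

Lemma g_mono s x x' : x <= x' -> g s x <= g s x'.
Proof. intros H. unfold g. apply IZR_le. apply up_mono. lra. Qed.

Lemma g_trans s (m : Z) x : g s (IZR m + x) = IZR m + g s x.
Proof.
  unfold g. replace (IZR m + x - s) with (IZR m + (x - s)) by ring.
  rewrite up_trans, plus_IZR. reflexivity.
Qed.

Lemma fr_bounds x : 0 <= fr x < 1.
Proof.
  unfold fr, fl. rewrite minus_IZR. destruct (archimed x). simpl. lra.
Qed.

Lemma x_decomp x : x = IZR (fl x) + fr x.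
Proof. unfold fr. ring. Qed.

Lemma g_ge s x : 0 < s <= 1 -> s <= fr x -> up (x - s) = up x.
Proof.
  intros Hs Hf. unfold fr, fl in Hf. rewrite minus_IZR in Hf. simpl in Hf.
  destruct (archimed x). symmetry. apply tech_up; lra.
Qed.

Lemma g_lt s x : 0 < s <= 1 -> fr x < s -> up (x - s) = (up x - 1)%Z.
Proof.
  intros Hs Hf. unfold fr, fl in Hf. rewrite minus_IZR in Hf. simpl in Hf.
  destruct (archimed x). symmetry. apply tech_up; rewrite minus_IZR; simpl; lra.
Qed.

Lemma g_range s x (M : nat) : 0 < s <= 1 -> 0 <= x <= IZR (Z.of_nat M) ->
  (0 <= up (x - s) <= Z.of_nat M)%Z.
Proof.
  intros Hs Hx. destruct (archimed (x - s)) as [A1 A2]. split.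
  - assert (-1 < up (x - s))%Z; [|lia]. apply lt_IZR. simpl. lra.
  - assert (up (x - s) < Z.of_nat M + 1)%Z; [|lia]. apply lt_IZR. rewrite plus_IZR. simpl. lra.
Qed.

Lemma inV_int n M (z : Z) : (1 <= M)%nat -> (0 <= z <= Z.of_nat M)%Z -> in_V n M (IZR z).
Proof.
  intros HM Hz. unfold in_V.
  assert (Hnz : IZR (2 * Z.of_nat n + 2) <> 0) by (apply not_0_IZR; lia).
  destruct (Z.eq_dec z (Z.of_nat M)) as [E|E].
  - exists (z - 1)%Z, (2 * Z.of_nat n + 2)%Z. split; [lia|split;[lia|]].
    rewrite minus_IZR. field. exact Hnz.
  - exists z, 0%Z. split; [lia|split;[lia|]]. unfold Rdiv. rewrite Rmult_0_l. ring.
Qed.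


Lemma glue n M a (u u' : Z -> R) j0 :
  satisfies n a u -> satisfies n a u' ->
  (forall j, in_V n M (u j)) -> (forall j, in_V n M (u' j)) ->
  (forall i:nat, (i < n)%nat -> u (Z.of_nat i) = u' (Z.of_nat i)) ->
  u j0 <> u' j0 ->
  exists z, satisfies n a z /\ ~ periodic z /\ forall j, in_V n M (z j).
Proof.
  intros Su Su' Vu Vu' Hag Hne.
  destruct (classic (periodic u)) as [[d [Hd Pd]] | Hnu]; [| exists u; auto].
  destruct (classic (periodic u')) as [[d' [Hd' Pd']] | Hnu']; [| exists u'; auto].
  set (w := fun k => if Z.ltb k 0 then u k else u' k).
  exists w. split; [|split].
  - intros k. destruct (Z_lt_le_dec k 0) as [hk|hk].
    + apply (sat_window n a u w k); [|apply Su].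
      intros i Hi. unfold w. destruct (Z.ltb_spec (Z.of_nat i + k) 0); auto.
      symmetry.
      replace (Z.of_nat i + k)%Z with (Z.of_nat (Z.to_nat (Z.of_nat i + k))) by lia.
      apply Hag. lia.
    + apply (sat_window n a u' w k); [|apply Su'].
      intros i Hi. unfold w. destruct (Z.ltb_spec (Z.of_nat i + k) 0); auto; lia.
  - intros [e [He Pe]].
    apply Hne.
    assert (E1 : u j0 = w j0).
    { rewrite <- (perZ u d Pd (- (Z.abs j0 + 1) * e) j0).
      transitivity (w (j0 + - (Z.abs j0 + 1) * e * d)%Z).
      { unfold w. destruct (Z.ltb_spec (j0 + - (Z.abs j0 + 1) * e * d) 0); auto.
        assert (1 <= e * d)%Z by nia. nia. }
      replace (j0 + - (Z.abs j0 + 1) * e * d)%Z with (j0 + (- (Z.abs j0 + 1) * d) * e)%Z by ring.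
      apply perZ; auto. }
    assert (E2 : u' j0 = w j0).
    { rewrite <- (perZ u' d' Pd' ((Z.abs j0 + 1) * e) j0).
      transitivity (w (j0 + (Z.abs j0 + 1) * e * d')%Z).
      { unfold w. destruct (Z.ltb_spec (j0 + (Z.abs j0 + 1) * e * d') 0); auto.
        assert (1 <= e * d')%Z by nia. nia. }
      replace (j0 + (Z.abs j0 + 1) * e * d')%Z with (j0 + ((Z.abs j0 + 1) * d') * e)%Z by ring.
      apply perZ; auto. }
    congruence.
  - intros j. unfold w. destruct (Z.ltb j 0); auto.
Qed.

Lemma eps_exists (t : nat -> R) (th : R) (m : nat) : th < 1 ->
  (forall i, (i < m)%nat -> t i <> th) ->
  exists e, 0 < e /\ th + e <= 1 /\ forall i, (i < m)%nat -> t i < th \/ th + e <= t i.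
Proof.
  intros Hth. induction m as [|m IH]; intros H.
  - exists (1 - th). split; [lra|split;[lra|]]. intros; lia.
  - destruct IH as [e [He1 [He2 He3]]]. { intros; apply H; lia. }
    destruct (Rlt_le_dec (t m) th) as [h|h].
    + exists e. split; [lra|split;[lra|]]. intros i Hi.
      destruct (Nat.eq_dec i m). subst; auto. apply He3; lia.
    + assert (t m <> th) by (apply H; lia).
      exists (Rmin e (t m - th)). split. apply Rmin_glb_lt; lra.
      split. pose proof (Rmin_l e (t m - th)); lra.
      intros i Hi. destruct (Nat.eq_dec i m).
      * subst. right. pose proof (Rmin_r e (t m - th)); lra.
      * destruct (He3 i ltac:(lia)); [left; auto| right].
        pose proof (Rmin_l e (t m - th)); lra.
Qed.

Lemma common_period (F : nat -> Z -> R) (m : nat) :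
  (forall i, (i <= m)%nat -> periodic (F i)) ->
  exists P, (1 <= P)%Z /\ forall i, (i <= m)%nat -> forall j, F i (j + P)%Z = F i j.
Proof.
  induction m as [|m IH]; intros H.
  - destruct (H 0%nat (le_n 0)) as [d [Hd Pd]]. exists d. split; auto.
    intros i Hi j. replace i with 0%nat by lia. auto.
  - destruct IH as [P [HP HPi]]. { intros i Hi; apply H; lia. }
    destruct (H (S m) (le_n _)) as [d [Hd Pd]].
    exists (P * d)%Z. split. nia. intros i Hi j.
    destruct (Nat.eq_dec i (S m)).
    + subst. apply perZ; auto.
    + replace (j + P * d)%Z with (j + d * P)%Z by ring. apply perZ; auto. apply HPi; lia.
Qed.


Lemma core n M a y : (1 <= n)%nat -> (1 <= M)%nat -> satisfies n a y -> ~ periodic y ->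
  (forall j, 0 <= y j <= IZR (Z.of_nat M)) ->
  exists z, satisfies n a z /\ ~ periodic z /\ forall j, in_V n M (z j).
Proof.
  intros Hn HM Hs Hnp Hb.
  assert (Sg : forall s, satisfies n a (fun j => g s (y j))).
  { intros s. apply sat_map; auto. apply g_mono. apply g_trans. }
  assert (Vg : forall s, 0 < s <= 1 -> forall j, in_V n M (g s (y j))).
  { intros s Hs' j. apply inV_int; auto. apply g_range; auto. }
  destruct (classic (exists s, 0 < s <= 1 /\ ~ periodic (fun j => g s (y j))))
    as [[s [Hs' Hnp']] | Hall].
  { exists (fun j => g s (y j)). auto. }
  assert (Hper : forall s, 0 < s <= 1 -> periodic (fun j => g s (y j))).
  { intros s Hs'. apply NNPP. intro. apply Hall. eauto. }
  destruct (classic (exists j, 0 < fr (y j) /\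
     forall i, (i < n)%nat -> fr (y (Z.of_nat i)) <> fr (y j))) as [[j [Hj Hi]] | HA].
  - pose proof (fr_bounds (y j)) as Fj.
    destruct (eps_exists (fun i => fr (y (Z.of_nat i))) (fr (y j)) n ltac:(lra) Hi)
      as [e [He1 [He2 He3]]].
    apply (glue n M a (fun k => g (fr (y j)) (y k)) (fun k => g (fr (y j) + e) (y k)) j).
    + apply Sg.
    + apply Sg.
    + apply Vg; lra.
    + apply Vg; lra.
    + intros i Hi'. unfold g. pose proof (fr_bounds (y (Z.of_nat i))).
      destruct (He3 i Hi') as [h|h].
      * rewrite !g_lt by lra. reflexivity.
      * rewrite !g_ge by lra. reflexivity.
    + unfold g. rewrite g_ge by lra. rewrite g_lt by lra. rewrite minus_IZR. simpl. lra.
  - exfalso. apply Hnp.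
    assert (HA' : forall j, 0 < fr (y j) -> exists i, (i < n)%nat /\ fr (y (Z.of_nat i)) = fr (y j)).
    { intros j Hj. apply NNPP. intro Hc. apply HA. exists j. split; auto.
      intros i Hi E. apply Hc. eauto. }
    set (t := fun i : nat => if Nat.ltb i n then
               (if Rlt_dec 0 (fr (y (Z.of_nat i))) then fr (y (Z.of_nat i)) else 1) else 1).
    assert (Ht : forall i, 0 < t i <= 1).
    { intros i. unfold t. pose proof (fr_bounds (y (Z.of_nat i))).
      destruct (Nat.ltb i n); [destruct (Rlt_dec 0 (fr (y (Z.of_nat i))))|]; lra. }
    destruct (common_period (fun i j => g (t i) (y j)) n) as [P [HP HPi]].
    { intros i _. apply Hper. apply Ht. }
    exists P. split; auto. intros j.
    set (x := y j). set (x' := y (j + P)%Z).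
    assert (Hg : forall i, (i <= n)%nat -> up (x - t i) = up (x' - t i)).
    { intros i Hi. symmetry. apply eq_IZR. exact (HPi i Hi j). }
    assert (Efl : up x = up x').
    { pose proof (Hg n (le_n n)) as H1. unfold t in H1. rewrite Nat.ltb_irrefl in H1.
      pose proof (fr_bounds x). pose proof (fr_bounds x').
      rewrite !g_lt in H1 by lra. lia. }
    assert (Efr : fr x = fr x').
    { pose proof (fr_bounds x) as Bx. pose proof (fr_bounds x') as Bx'.
      destruct (Rtotal_order (fr x) (fr x')) as [h|[h|h]]; auto; exfalso.
      - destruct (HA' (j + P)%Z ltac:(fold x'; lra)) as [i [Hi Ei]]. fold x' in Ei.
        assert (Eti : t i = fr x').
        { unfold t. rewrite (proj2 (Nat.ltb_lt i n) Hi).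
          destruct (Rlt_dec 0 (fr (y (Z.of_nat i)))); [auto | lra]. }
        pose proof (Hg i ltac:(lia)) as H1. rewrite Eti in H1.
        rewrite g_lt in H1 by lra. rewrite g_ge in H1 by lra. lia.
      - destruct (HA' j ltac:(fold x; lra)) as [i [Hi Ei]]. fold x in Ei.
        assert (Eti : t i = fr x).
        { unfold t. rewrite (proj2 (Nat.ltb_lt i n) Hi).
          destruct (Rlt_dec 0 (fr (y (Z.of_nat i)))); [auto | lra]. }
        pose proof (Hg i ltac:(lia)) as H1. rewrite Eti in H1.
        rewrite g_ge in H1 by lra. rewrite g_lt in H1 by lra. lia. }
    rewrite (x_decomp x), (x_decomp x'). unfold fl. rewrite Efl, Efr. reflexivity.
Qed.


Lemma min_exists (y : nat -> R) (m : nat) :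
  exists c, (exists i, (i <= m)%nat /\ y i = c) /\ forall i, (i <= m)%nat -> c <= y i.
Proof.
  induction m as [|m IH].
  - exists (y 0%nat). split. exists 0%nat; auto. intros i Hi. replace i with 0%nat by lia. lra.
  - destruct IH as [c [[i0 [Hi0 Hc]] Hall]].
    destruct (Rle_lt_dec c (y (S m))).
    + exists c. split. exists i0; split; auto. intros i Hi.
      destruct (Nat.eq_dec i (S m)). subst; auto. apply Hall; lia.
    + exists (y (S m)). split. exists (S m); auto. intros i Hi.
      destruct (Nat.eq_dec i (S m)). subst; lra. specialize (Hall i ltac:(lia)). lra.
Qed.


Lemma not_n (n : nat) (a : nat -> Z) (y : Z -> R) (Hn : (1 <= n)%nat) (Ha : forall i, (i <= n)%nat -> (0 <= a i)%Z) (Ha0 : a 0%nat = 0%Z) (Han : a n = 0%Z) (Hs : satisfies n a y) k : exists i', (i' < n)%nat /\ attains_min n a y k i'.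
Proof.
  destruct (Hs k) as (i1 & i2 & Hne & [Hi1 H1] & [Hi2 H2]).
  destruct (Nat.eq_dec i1 n).
  - exists i2. split. lia. split; auto.
  - exists i1. split. lia. split; auto.
Qed.

Lemma not_0 (n : nat) (a : nat -> Z) (y : Z -> R) (Hn : (1 <= n)%nat) (Ha : forall i, (i <= n)%nat -> (0 <= a i)%Z) (Ha0 : a 0%nat = 0%Z) (Han : a n = 0%Z) (Hs : satisfies n a y) k : exists i', (1 <= i' <= n)%nat /\ attains_min n a y k i'.
Proof.
  destruct (Hs k) as (i1 & i2 & Hne & [Hi1 H1] & [Hi2 H2]).
  destruct (Nat.eq_dec i1 0).
  - exists i2. split. lia. split; auto.
  - exists i1. split. lia. split; auto.
Qed.

Lemma aR (n : nat) (a : nat -> Z) (Ha : forall i, (i <= n)%nat -> (0 <= a i)%Z) i : (i <= n)%nat -> 0 <= IZR (a i).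
Proof. intros; apply IZR_le; apply Ha; auto. Qed.

Lemma lower (n : nat) (a : nat -> Z) (y : Z -> R) (Hn : (1 <= n)%nat) (Ha : forall i, (i <= n)%nat -> (0 <= a i)%Z) (Ha0 : a 0%nat = 0%Z) (Han : a n = 0%Z) (Hs : satisfies n a y) c : (forall i, (i < n)%nat -> c <= y (Z.of_nat i)) ->
  forall k, forall i, (i < n)%nat -> c <= y (Z.of_nat i + k)%Z.
Proof.
  intros H0 k. induction k as [|k IHk|k IHk] using Z.peano_ind.
  - intros i Hi. rewrite Z.add_0_r. auto.
  - intros i Hi. destruct (Nat.eq_dec i (n-1)) as [E|E].
    + replace (Z.of_nat i + Z.succ k)%Z with (Z.of_nat n + k)%Z by lia.
      destruct (not_n n a y Hn Ha Ha0 Han Hs k) as [i' [Hi' [_ H']]].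
      specialize (H' n (le_n n)). unfold trop_term in H'. rewrite Han in H'.
      specialize (IHk i' Hi'). pose proof (aR n a Ha i' ltac:(lia)). simpl in H'. lra.
    + replace (Z.of_nat i + Z.succ k)%Z with (Z.of_nat (S i) + k)%Z by lia. apply IHk. lia.
  - intros i Hi. destruct (Nat.eq_dec i 0) as [E|E].
    + subst i. simpl.
      destruct (not_0 n a y Hn Ha Ha0 Han Hs (Z.pred k)) as [i' [Hi' [_ H']]].
      specialize (H' 0%nat ltac:(lia)). unfold trop_term in H'. rewrite Ha0 in H'.
      specialize (IHk (i' - 1)%nat ltac:(lia)).
      replace (Z.of_nat (i' - 1) + k)%Z with (Z.of_nat i' + Z.pred k)%Z in IHk by lia.
      pose proof (aR n a Ha i' ltac:(lia)). simpl in H'. lra.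
    + replace (Z.of_nat i + Z.pred k)%Z with (Z.of_nat (i - 1) + k)%Z by lia. apply IHk. lia.
Qed.

Lemma upperQ (n : nat) (a : nat -> Z) (y : Z -> R) (Hn : (1 <= n)%nat) (Ha : forall i, (i <= n)%nat -> (0 <= a i)%Z) (Ha0 : a 0%nat = 0%Z) (Han : a n = 0%Z) (Hs : satisfies n a y) c : (exists i, (i < n)%nat /\ y (Z.of_nat i) <= c) ->
  forall k, exists i, (i < n)%nat /\ y (Z.of_nat i + k)%Z <= c.
Proof.
  intros H0 k. induction k as [|k IHk|k IHk] using Z.peano_ind.
  - destruct H0 as [i [Hi Hy]]. exists i. rewrite Z.add_0_r. auto.
  - destruct IHk as [i [Hi Hy]]. destruct (Nat.eq_dec i 0) as [E|E].
    + subst i. destruct (not_0 n a y Hn Ha Ha0 Han Hs k) as [i' [Hi' [_ H']]].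
      specialize (H' 0%nat ltac:(lia)). unfold trop_term in H'. rewrite Ha0 in H'.
      pose proof (aR n a Ha i' ltac:(lia)). exists (i' - 1)%nat. split. lia.
      replace (Z.of_nat (i' - 1) + Z.succ k)%Z with (Z.of_nat i' + k)%Z by lia.
      simpl in H', Hy. lra.
    + exists (i - 1)%nat. split. lia.
      replace (Z.of_nat (i - 1) + Z.succ k)%Z with (Z.of_nat i + k)%Z by lia. auto.
  - destruct IHk as [i [Hi Hy]]. destruct (Nat.eq_dec i (n - 1)) as [E|E].
    + destruct (not_n n a y Hn Ha Ha0 Han Hs (Z.pred k)) as [i' [Hi' [_ H']]].
      specialize (H' n (le_n n)). unfold trop_term in H'. rewrite Han in H'.
      pose proof (aR n a Ha i' ltac:(lia)). exists i'. split. auto.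
      replace (Z.of_nat n + Z.pred k)%Z with (Z.of_nat i + k)%Z in H' by lia.
      simpl in H'. lra.
    + exists (S i). split. lia.
      replace (Z.of_nat (S i) + Z.pred k)%Z with (Z.of_nat i + k)%Z by lia. auto.
Qed.



Theorem lemma4 (n M : nat) (a : nat -> Z) :
  (1 <= n)%nat -> (1 <= M)%nat ->
  (forall i : nat, (i <= n)%nat -> (0 <= a i <= Z.of_nat M)%Z) ->
  a 0%nat = 0%Z -> a n = 0%Z ->
  (exists y : Z -> R, satisfies n a y /\ minimal_seq n a y /\ ~ periodic y) ->
  exists z : Z -> R, satisfies n a z /\ ~ periodic z /\ (forall j : Z, in_V n M (z j)).
Proof.
  intros Hn HM Ha Ha0 Han [y [Hs [Hmin Hnp]]].
  assert (Ha' : forall i, (i <= n)%nat -> (0 <= a i)%Z) by (intros i Hi; apply Ha; auto).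
  destruct (min_exists (fun i => y (Z.of_nat i)) (n - 1)) as [c [[i0 [Hi0 Hc]] Hall]].
  assert (Lo : forall j, c <= y j).
  { intros j. pose proof (lower n a y Hn Ha' Ha0 Han Hs c) as L.
    replace j with (Z.of_nat 0 + j)%Z by lia. apply L. intros i Hi. apply Hall. lia. lia. }
  assert (Up : forall j, y j <= c + IZR (Z.of_nat M)).
  { intros j. destruct (Hmin j) as [k [Hk [_ Hk2]]].
    destruct (upperQ n a y Hn Ha' Ha0 Han Hs c) with (k := k) as [i [Hi Hy]].
    { exists i0. split. lia. simpl in Hc. lra. }
    specialize (Hk2 i ltac:(lia)). unfold trop_term in Hk2.
    rewrite Z2Nat.id in Hk2 by lia. replace (j - k + k)%Z with j in Hk2 by lia.
    pose proof (aR n a Ha' (Z.to_nat (j - k)) ltac:(lia)).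
    assert (IZR (a i) <= IZR (Z.of_nat M)) by (apply IZR_le; apply Ha; lia). lra. }
  apply (core n M a (fun j => y j - c) Hn HM).
  - apply (sat_map n a y (fun x => x - c)); auto. intros; lra. intros; ring.
  - intros [d [Hd Pd]]. apply Hnp. exists d. split; auto. intros j.
    specialize (Pd j). simpl in Pd. lra.
  - intros j. specialize (Lo j). specialize (Up j). lra.
Qed.
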